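(* Let $\rho\in(0,1)$ and $1\le r\le d$. Then every $Z\in T_{\rho,r}$ satisfies $$\frac{\|Z\|_1^2}{\|Z\|_2^2}\le\left(\frac{\rho+1}{\rho}\right)^2 r.$$
   Context: $H_d$ is the real vector space of Hermitian $d\times d$ matrices; $\|\cdot\|_1$ is the nuclear norm and $\|\cdot\|_2$ the Frobenius norm. For $Z\in H_d$ let $Z_r$ be a best rank-$r$ approximation of $Z$ in nuclear norm (keep the $r$ eigenvalues of largest modulus in the spectral decomposition), and $Z_c=Z-Z_r$, so $\|Z_c\|_1=\sigma_r(Z)=\inf\{\|Z-Y\|_1:\mathrm{rank}(Y)=r\}$. Define $T_{\rho,r}=\{Z\in H_d:\ \|Z_r\|_2>\frac{\rho}{\sqrt r}\|Z_c\|_1,\ \|Z\|_2=1\}$. *)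

(* Defs.v *)
From HB Require Import structures.
From mathcomp Require Import all_boot all_order all_algebra.
Set Implicit Arguments. Unset Strict Implicit. Unset Printing Implicit Defensive.
Import Order.TTheory GRing.Theory Num.Theory.
Local Open Scope ring_scope.
Local Open Scope sesquilinear_scope.

(* Scalars: C is any numerically closed field (e.g. algC, or complex R); the
   paper's case is C = complex numbers. *)

Definition frob_norm {C : numClosedFieldType} (m n : nat) (A : 'M[C]_(m, n)) : C :=
  sqrtC (\sum_(i < m) \sum_(j < n) `|A i j| ^+ 2).

(* Nuclear norm ||A||_1 = sum of the singular values of A, i.e. of the square
   roots of the eigenvalues of the Hermitian PSD matrix A^* A (given by the
   library's spectral decomposition). *)
Definition nuc_norm {C : numClosedFieldType} (n : nat) (A : 'M[C]_n) : C :=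
  \sum_(i < n) sqrtC (spectral_diag (A ^t* *m A) 0 i).

(* Zr is a best rank-r approximation of the Hermitian matrix Z obtained by
   keeping, in a spectral decomposition Z = U^* diag(lam) U (U unitary, lam
   real), the r eigenvalues of largest modulus (indices S, #|S| = r). *)
Definition spectral_trunc {C : numClosedFieldType} (d r : nat)
    (Z Zr : 'M[C]_d) : Prop :=
  exists (U : 'M[C]_d) (lam : 'rV[C]_d) (S : {set 'I_d}),
    [/\ U \is unitarymx /\ lam \is a realmx,
        Z = U ^t* *m diag_mx lam *m U,
        #|S| = r,
        (forall i j, i \in S -> j \notin S -> `|lam 0 j| <= `|lam 0 i|) &
        Zr = U ^t* *m diag_mx (\row_k (if k \in S then lam 0 k else 0)) *m U].

(* Main.v *)
Require Import Defs.
From HB Require Import structures.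
From mathcomp Require Import all_boot all_order all_algebra.
Import Order.TTheory GRing.Theory Num.Theory.
Local Open Scope ring_scope.
Local Open Scope sesquilinear_scope.

Lemma char_poly_conj (F : fieldType) n (P A : 'M[F]_n) : P \in unitmx ->
  char_poly (invmx P *m A *m P) = char_poly A.
Proof.
move=> Pu; rewrite /char_poly /char_poly_mx.
have -> : 'X%:M - map_mx polyC (invmx P *m A *m P) =
   map_mx polyC (invmx P) *m ('X%:M - map_mx polyC A) *m map_mx polyC P.
  rewrite mulmxBr mulmxBl -!map_mxM; congr (_ - _).
  by rewrite mul_mx_scalar -scalemxAl -map_mxM mulVmx // map_mx1 scalemx1.
rewrite !det_mulmx mulrAC -det_mulmx -map_mxM mulVmx // map_mx1 det1 mul1r //.
Qed.

Lemma char_poly_diag (F : fieldType) n (v : 'rV[F]_n) :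
  char_poly (diag_mx v) = \prod_(i < n) ('X - (v 0 i)%:P).
Proof.
rewrite char_poly_trig ?diag_mx_is_trig //.
by apply: eq_bigr => i _; rewrite mxE eqxx mulr1n.
Qed.

Lemma prod_seq (F : fieldType) n (f : 'I_n -> F) :
  \prod_(i < n) ('X - (f i)%:P) = \prod_(x <- [seq f i | i in 'I_n]) ('X - x%:P).
Proof. by rewrite big_image. Qed.

Lemma conj_diag (C : numClosedFieldType) d (U : 'M[C]_d) (mu nu : 'rV[C]_d) :
  U \is unitarymx ->
  (U^t* *m diag_mx mu *m U) *m (U^t* *m diag_mx nu *m U) =
  U^t* *m diag_mx (\row_i (mu 0 i * nu 0 i)) *m U.
Proof.
move=> /unitarymxP Uu.
rewrite -!mulmxA (mulmxA U) Uu mul1mx (mulmxA (diag_mx mu)) mulmx_diag !mulmxA.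
done.
Qed.

Lemma adj_conj (C : numClosedFieldType) d (U : 'M[C]_d) (mu : 'rV[C]_d) :
  (U^t* *m diag_mx mu *m U)^t* = U^t* *m diag_mx (\row_i (mu 0 i)^*) *m U.
Proof.
rewrite !trmx_mul !map_mxM trmxCK tr_diag_mx map_diag_mx mulmxA.
congr (_ *m _ *m _). congr diag_mx. by apply/matrixP => i j; rewrite !mxE ord1.
Qed.

Lemma nuc_diag (C : numClosedFieldType) d (U : 'M[C]_d) (mu : 'rV[C]_d) :
  U \is unitarymx ->
  nuc_norm (U^t* *m diag_mx mu *m U) = \sum_i `|mu 0 i|.
Proof.
move=> Uu; set Z := U^t* *m diag_mx mu *m U.
set w := \row_i (`|mu 0 i| ^+ 2).
have ZZ : Z^t* *m Z = invmx U *m diag_mx w *m U.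
  rewrite /Z adj_conj conj_diag // invmx_unitary //.
  by congr (_ *m diag_mx _ *m _); apply/matrixP => i j; rewrite !mxE normCK mulrC.
have Anorm : Z^t* *m Z \is normalmx.
  by apply/orthomx_spectral_subproof; exists (U, w).
have E := orthomx_spectralP Anorm.
have cp : char_poly (diag_mx (spectral_diag (Z^t* *m Z))) = char_poly (diag_mx w).
  by rewrite -(@char_poly_conj _ _ _ _ (spectral_unit (Z^t* *m Z))) -E ZZ char_poly_conj // unitarymx_unit.
move: cp; rewrite !char_poly_diag !prod_seq => /prod_XsubC_eq pe.
rewrite /nuc_norm.
have -> : \sum_i sqrtC (spectral_diag (Z^t* *m Z) 0 i) =
  \sum_(x <- [seq spectral_diag (Z^t* *m Z) 0 i | i in 'I_d]) sqrtC x by rewrite big_image.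
rewrite (perm_big _ pe) big_image; apply: eq_bigr => i _.
by rewrite mxE sqrCK // normr_ge0.
Qed.
Lemma cs_sum (R : numDomainType) (I : finType) (A : pred I) (x : I -> R) :
  (forall i, x i \is Num.real) ->
  (\sum_(i in A) x i) ^+ 2 <= #|A|%:R * \sum_(i in A) x i ^+ 2.
Proof.
move=> xr.
set a := \sum_(i in A) x i; set b := \sum_(i in A) x i ^+ 2.
have H : 0 <= \sum_(i in A) \sum_(j in A) (x i - x j) ^+ 2.
  apply: sumr_ge0 => i _; apply: sumr_ge0 => j _.
  by rewrite -realEsqr rpredB.
have E : \sum_(i in A) \sum_(j in A) (x i - x j) ^+ 2 = (#|A|%:R * b - a ^+ 2) *+ 2.
  rewrite (eq_bigr (fun i => x i ^+2 *+ #|A| + b - (x i * a) *+ 2)); last first.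
    move=> i _; rewrite (eq_bigr (fun j => x i ^+ 2 + x j ^+ 2 - (x i * x j) *+ 2)); last first.
      by move=> j _; rewrite sqrrB addrAC.
    by rewrite sumrB big_split /= sumr_const -/b sumrMnl -mulr_sumr.
  rewrite sumrB big_split /= !sumrMnl -mulr_suml -/a -/b sumr_const.
  by rewrite mulrnBl -mulr2n expr2 mulr_natl -mulrnA mulnC mulrnA.
by move: H; rewrite E pmulrn_lge0 // subr_ge0.
Qed.

Lemma frob_diag (C : numClosedFieldType) d (U : 'M[C]_d) (mu : 'rV[C]_d) :
  U \is unitarymx ->
  frob_norm (U^t* *m diag_mx mu *m U) = sqrtC (\sum_i `|mu 0 i| ^+ 2).
Proof.
move=> Uu; set Z := U^t* *m diag_mx mu *m U; rewrite /frob_norm; congr sqrtC.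
have -> : \sum_i \sum_j `|Z i j| ^+ 2 = \tr (Z *m Z^t*).
  rewrite /mxtrace; apply: eq_bigr => i _; rewrite mxE; apply: eq_bigr => j _.
  by rewrite !mxE normCK.
rewrite /Z adj_conj conj_diag // mxtrace_mulC mulmxA.
move/unitarymxP: (Uu) => ->; rewrite mul1mx mxtrace_diag.
by apply: eq_bigr => i _; rewrite !mxE normCK.
Qed.

Theorem lemma1 (C : numClosedFieldType) (d r : nat) (rho : C)
    (Z Zr : 'M[C]_d) :
  0 < rho -> rho < 1 -> (1 <= r)%N -> (r <= d)%N ->
  Z \is hermsymmx ->
  spectral_trunc r Z Zr ->
  (* Z in T_{rho,r}, with Z_c = Z - Z_r *)
  rho / sqrtC r%:R * nuc_norm (Z - Zr) < frob_norm Zr ->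
  frob_norm Z = 1 ->
  nuc_norm Z ^+ 2 / frob_norm Z ^+ 2 <= ((rho + 1) / rho) ^+ 2 * r%:R.
Proof.
move=> rho0 rho1 r1 rd _ [U [lam [S [[Uu _] EZ cardS _ EZr]]]] hyp fZ.
set a := \row_k (if k \in S then lam 0 k else 0).
set b := \row_k (if k \in S then 0 else lam 0 k).
have Ec : Z - Zr = U^t* *m diag_mx b *m U.
  have Elam : lam = a + b.
    by apply/matrixP => i j; rewrite !mxE ord1; case: (j \in S); rewrite ?addr0 ?add0r.
  have dD : diag_mx (a + b) = diag_mx a + diag_mx b.
    by apply/matrixP => i j; rewrite !mxE mulrnDl.
  by rewrite EZr -/a EZ Elam dD mulmxDr mulmxDl addrAC subrr add0r.
have nsplit : nuc_norm Z = nuc_norm Zr + nuc_norm (Z - Zr).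
  rewrite Ec {1}EZ EZr !nuc_diag // -big_split; apply: eq_bigr => i _.
  by rewrite !mxE; case: (i \in S) => /=; rewrite normr0 ?addr0 ?add0r.
set A := nuc_norm Zr; set Nc := nuc_norm (Z - Zr).
set B := \sum_(i in S) `|lam 0 i| ^+ 2.
set T := \sum_i `|lam 0 i| ^+ 2.
have EA : A = \sum_(i in S) `|lam 0 i|.
  rewrite /A EZr nuc_diag // [RHS]big_mkcond; apply: eq_bigr => i _.
  by rewrite !mxE; case: (i \in S); rewrite ?normr0.
have FZr : frob_norm Zr = sqrtC B.
  rewrite EZr frob_diag // /B [in RHS]big_mkcond; congr sqrtC; apply: eq_bigr => i _.
  by rewrite !mxE; case: (i \in S); rewrite ?normr0 ?expr0n.
have CS : A ^+ 2 <= r%:R * B.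
  rewrite EA -cardS; apply: cs_sum => i; exact: normr_real.
have B0 : 0 <= B by apply: sumr_ge0 => i _; rewrite exprn_ge0.
have BT : B <= T.
  rewrite /B big_mkcond; apply: ler_sum => i _; case: (i \in S) => //.
  by rewrite exprn_ge0.
have T1 : T = 1.
  by rewrite -(sqrtCK T) /T -(frob_diag _ _ _ lam Uu) -EZ fZ expr1n.
set F := sqrtC B.
have F0 : 0 <= F by rewrite sqrtC_ge0.
have F1 : F <= 1.
  by rewrite -sqrtC1 ler_sqrtC ?qualifE /= ?ler01 // -T1.
set s := sqrtC (r%:R : C).
have s0 : 0 < s by rewrite sqrtC_gt0 ltr0n.
have A0 : 0 <= A by rewrite EA sumr_ge0.
have Nc0 : 0 <= Nc by rewrite /Nc Ec nuc_diag // sumr_ge0.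
have As : A <= s * F.
  have sF0 : 0 <= s * F by rewrite mulr_ge0 // ltW.
  rewrite -(ler_pXn2r (n:=2)) ?nnegrE //.
  by rewrite exprMn !sqrtCK.
have Ns : Nc <= s * F / rho.
  have -> : Nc = (s / rho) * (rho / s * Nc).
    by rewrite mulrA -(invf_div rho s) mulVf ?mul1r // mulf_neq0 ?invr_eq0 ?gt_eqF.
  rewrite [X in _ <= X]mulrAC; apply: ler_wpM2l; first by rewrite divr_ge0 ?ltW.
  by apply: ltW; rewrite /F -FZr.
have K0 : 0 <= (rho + 1) / rho by rewrite divr_ge0 ?addr_ge0 ?ltW.
have Sum : A + Nc <= (rho + 1) / rho * s.
  have EK : (rho + 1) / rho = 1 + rho^-1 by rewrite mulrDl divff ?gt_eqF // mul1r.
  apply: (le_trans (lerD As Ns)).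
  rewrite -[X in X + _]mulr1 -mulrDr -EK [X in _ <= X]mulrC.
  apply: ler_wpM2r => //; rewrite -[X in _ <= X]mulr1; apply: ler_wpM2l => //; exact: ltW.
rewrite fZ expr1n divr1 nsplit -/A -/Nc -(sqrtCK r%:R) -/s -exprMn.
have s0w : 0 <= s := ltW s0.
rewrite (ler_pXn2r (n:=2)) ?nnegrE ?addr_ge0 ?mulr_ge0.
have rho0w : 0 <= rho := ltW rho0.
all: rewrite ?invr_ge0 ?addr_ge0 ?ler01 //.
all: exact: ltW rho0.
Qed.
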